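(* Let $\mathbb S$ be the free semigroup action on the compact metric space $X$ generated by continuous maps $g_1,\dots,g_p$, with entropy function $h_{top}(\cdot)$. (i) If $K\subset X$ is a countable closed subset with a unique limit point $x_0$, then $h_{top}(x_0)\ge h_{top}(K,\mathbb S)$. (ii) For every $x_0\in X$ there exists a countable closed subset $K\subset X$ with $x_0\in K$ such that $x_0$ is the unique limit point of $K$ in $X$ and $h_{top}(x_0)=h_{top}(K,\mathbb S)$.
   Context: Setting: $(X,d)$ compact metric space, $g_1,\dots,g_p:X\to X$ continuous; $G_n^*$ the set of words $\underline g=g_{i_n}\cdots g_{i_1}$, $i_j\in\{1,\dots,p\}$; $d_{\underline g}(x,y)=\max_{0\le j\le n}d(g_{i_j}\cdots g_{i_1}x,g_{i_j}\cdots g_{i_1}y)$; $s(K,\underline g,\varepsilon)$ and $b_d(K,\underline g,\varepsilon)$ are the maximal cardinality of a $(\underline g,\varepsilon)$-separated subset of $K$, resp. the minimal cardinality of a $(\underline g,\varepsilon)$-spanning subset of $K$. $h_{top}(K,\mathbb S)=\lim_{\varepsilon\to0}\limsup_n\frac1n\log\big(p^{-n}\sum_{\underline g\in G_n^*}s(K,\underline g,\varepsilon)\big)$. Entropy function: $B_d(K,\mathbb S,\varepsilon)=\limsup_n\frac1n\log\big(p^{-n}\sum_{\underline g\in G_n^*}b_d(K,\underline g,\varepsilon)\big)$, $h_d(x,\varepsilon)=\inf\{B_d(K,\mathbb S,\varepsilon):K\text{ compact neighbourhood of }x\}$, $h_{top}(x)=\lim_{\varepsilon\to0^+}h_d(x,\varepsilon)$.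 *)

(* Defs.v *)
From HB Require Import structures.
From mathcomp Require Import all_boot all_order all_algebra.
From mathcomp Require Import all_classical all_reals all_analysis.
Set Implicit Arguments. Unset Strict Implicit. Unset Printing Implicit Defensive.
Import Order.TTheory GRing.Theory Num.Theory.
Local Open Scope classical_set_scope.
Local Open Scope ring_scope.

Section FreeSemigroupEntropy.
Variables (R : realType) (X : metricType R) (p : nat) (g : 'I_p -> X -> X).

(* A word of length n is w = (i_1, ..., i_n) : n.-tuple 'I_p, standing for
   g_{i_n} ... g_{i_1}.  [wpref w j x] = g_{i_j} ... g_{i_1} x (j = 0: x). *)
Definition wpref (n : nat) (w : n.-tuple 'I_p) (j : nat) (x : X) : X :=
  foldl (fun y i => g i y) x (take j w).

Definition dword (n : nat) (w : n.-tuple 'I_p) (x y : X) : R :=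
  \big[Num.max/0]_(j < n.+1) mdist (wpref w j x) (wpref w j y).

Definition separated (K : set X) n (w : n.-tuple 'I_p) (eps : R) (E : seq X) :=
  [/\ uniq E, {subset E <= K} &
      forall x y, x \in E -> y \in E -> x != y -> eps < dword w x y].

Definition spanning (K : set X) n (w : n.-tuple 'I_p) (eps : R) (E : seq X) :=
  [/\ uniq E, {subset E <= K} &
      forall y, K y -> exists2 x, x \in E & dword w x y <= eps].

Definition s_sep (K : set X) n (w : n.-tuple 'I_p) (eps : R) : R :=
  sup [set (size E)%:R | E in separated K w eps].

Definition b_span (K : set X) n (w : n.-tuple 'I_p) (eps : R) : R :=
  inf [set (size E)%:R | E in spanning K w eps].

Local Open Scope ereal_scope.

Definition growth (F : forall n, n.-tuple 'I_p -> R) : \bar R :=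
  limn_esup (fun n : nat =>
    ((n%:R)^-1 * ln ((p%:R ^- n) * \sum_(w : n.-tuple 'I_p) F n w))%R%:E).

Definition htopK (K : set X) : \bar R :=
  lim ((fun eps : R => growth (fun n w => s_sep K w eps)) @ 0^'+).

Definition Bd (K : set X) (eps : R) : \bar R :=
  growth (fun n w => b_span K w eps).

Definition hd (x : X) (eps : R) : \bar R :=
  ereal_inf [set Bd K eps | K in [set K : set X | compact K /\ nbhs x K]].

Definition htopx (x : X) : \bar R := lim (hd x @ 0^'+).

End FreeSemigroupEntropy.

(* Main.v *)
Require Import Defs.
From HB Require Import structures.
From mathcomp Require Import all_boot all_order all_algebra.
From mathcomp Require Import all_classical all_reals all_analysis.
Set Implicit Arguments. Unset Strict Implicit. Unset Printing Implicit Defensive.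
Import Order.TTheory GRing.Theory Num.Theory.
Local Open Scope classical_set_scope.
Local Open Scope ring_scope.


Definition pt_of (T : topologicalType) (x : T) : Type := T.
HB.instance Definition _ (T : topologicalType) (x : T) := Topological.copy (@pt_of T x) T.
HB.instance Definition _ (T : topologicalType) (x : T) := isPointed.Build (@pt_of T x) x.
Lemma cover_of (T : topologicalType) (x : T) (A : set T) : compact A -> cover_compact A.
Proof.
move=> cA; have h := @compact_cover (@pt_of T x).
have : @compact (@pt_of T x) A by [].
by rewrite h.
Qed.

Section A.
Context (R : realType) (X : metricType R) (p : nat) (g : 'I_p -> X -> X).
Hypothesis gc : forall i, continuous (g i).

Lemma foldl_cont (s : seq 'I_p) :
  continuous (fun x : X => foldl (fun y i => g i y) x s).
Proof.
elim: s => [|i s IH] /=; first by move=> x; exact: cvg_id.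
move=> x; have := continuous_comp (@gc i x) (IH (g i x)); exact.
Qed.

Lemma wpref_cont n (w : n.-tuple 'I_p) j : continuous (wpref g w j).
Proof. exact: foldl_cont. Qed.

Lemma bigmax0_ge0 n (F : 'I_n -> R) : 0 <= \big[Num.max/0]_(j < n) F j.
Proof.
elim: n F => [|n IH] F; first by rewrite big_ord0.
by rewrite big_ord_recl le_max IH orbT.
Qed.

Lemma le_bigmax0 n (F : 'I_n -> R) j : F j <= \big[Num.max/0]_(j < n) F j.
Proof. by rewrite (bigD1 j) //= le_max lexx. Qed.

Lemma bigmax0_le n (F : 'I_n -> R) c : 0 <= c -> (forall j, F j <= c) ->
  \big[Num.max/0]_(j < n) F j <= c.
Proof. by move=> c0 Fc; elim/big_ind: _ => // x y hx hy; rewrite ge_max hx. Qed.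

Lemma bigmax0_lt n (F : 'I_n -> R) c : 0 < c -> (forall j, F j < c) ->
  \big[Num.max/0]_(j < n) F j < c.
Proof. by move=> c0 Fc; elim/big_ind: _ => // x y hx hy; rewrite gt_max hx. Qed.

Lemma dword_ge0 n (w : n.-tuple 'I_p) x y : 0 <= dword g w x y.
Proof. exact: bigmax0_ge0. Qed.

Lemma dwordxx n (w : n.-tuple 'I_p) x : dword g w x x = 0.
Proof.
apply/eqP; rewrite eq_le dword_ge0 andbT; apply: bigmax0_le => // j.
by rewrite mdistxx.
Qed.

Lemma dwordC n (w : n.-tuple 'I_p) x y : dword g w x y = dword g w y x.
Proof. by apply: eq_bigr => j _; rewrite metric_sym. Qed.

Lemma dword_triangle n (w : n.-tuple 'I_p) x y z :
  dword g w x z <= dword g w x y + dword g w y z.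
Proof.
apply: bigmax0_le; first by rewrite addr_ge0 // dword_ge0.
move=> j; apply: le_trans (metric_triangle _ (wpref g w j y) _) _.
by apply: lerD; apply: le_bigmax0.
Qed.

Lemma mball_nbhs (x y : X) e : mdist x y < e -> nbhs y [set z | mdist x z < e].
Proof.
move=> h; apply/nbhs_ballP; exists (e - mdist x y); first by rewrite /= subr_gt0.
move=> z; rewrite ballEmdist /= => hz.
by apply: le_lt_trans (metric_triangle x y z) _; rewrite -ltrBrDl.
Qed.

Lemma dword_open n (w : n.-tuple 'I_p) x e : 0 < e ->
  open [set y | dword g w x y < e].
Proof.
move=> e0; rewrite openE => y /= hy.
have : forall j : 'I_n.+1, \forall z \near y,
    mdist (wpref g w j x) (wpref g w j z) < e.
  move=> j.
  have hj : mdist (wpref g w j x) (wpref g w j y) < e.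
    by apply: le_lt_trans hy; apply: le_bigmax0.
  have := mball_nbhs hj.
  by move=> /(@wpref_cont _ w j y).
move=> /filter_forall; apply: filterS => z hz /=.
exact: bigmax0_lt.
Qed.

End A.


Section B.
Context (R : realType) (X : metricType R) (p : nat) (g : 'I_p -> X -> X).
Hypothesis gc : forall i, continuous (g i).

Lemma sep_le_cover n (w : n.-tuple 'I_p) (A : set X) (E S : seq X) c e :
  uniq E -> (forall x, x \in E -> A x) ->
  (forall x y, x \in E -> y \in E -> x != y -> c < dword g w x y) ->
  (forall y, A y -> exists2 z, z \in S & dword g w z y <= e) ->
  e + e <= c -> (size E <= size S)%N.
Proof.
move=> uE EA sep cov ec.
have [f hf] : {f : X -> X & forall x, x \in E -> f x \in S /\ dword g w (f x) x <= e}.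
  apply: (@choice _ _ (fun x z => x \in E -> z \in S /\ dword g w z x <= e)) => x; have [xE|xE] := boolP (x \in E); last by exists x.
  by have [z zS hz] := cov x (EA x xE); exists z.
rewrite -(size_map f); apply: uniq_leq_size.
  rewrite map_inj_in_uniq // => x y xE yE fxy; apply/eqP; apply/negP => /negP nxy.
  have := sep x y xE yE nxy; apply/negP; rewrite -leNgt.
  apply: le_trans (dword_triangle g w x (f x) y) _; rewrite dwordC.
  apply: le_trans ec; apply: lerD; first by case: (hf x xE).
  by rewrite fxy; case: (hf y yE).
by move=> z /mapP[x xE ->]; case: (hf x xE).
Qed.

Lemma span_exists n (w : n.-tuple 'I_p) (A : set X) e : compact A -> 0 < e ->
  exists S, spanning g A w e S.
Proof.
move=> cA e0; have [[a Aa]|A0] := pselect (A !=set0); last first.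
  exists [::]; split => // y Ay; exfalso; apply: A0; by exists y.
have cA' := cover_of a cA.
case: (cA' X A (fun x => [set y | dword g w x y < e])).
- by move=> x _; exact: (dword_open gc).
- by move=> y Ay; exists y => //=; rewrite dwordxx.
move=> D' D'A AD; exists (finmap.enum_fset D'); split.
- exact: finmap.fset_uniq.
- by move=> x /D'A.
- move=> y /AD [x /= xD hx]; exists x => //; exact: ltW.
Qed.

Hypothesis cX : compact [set: X].

Lemma sep_bound n (w : n.-tuple 'I_p) e : 0 < e ->
  exists M, forall (A : set X) (E : seq X), Defs.separated g A w e E -> (size E <= M)%N.
Proof.
move=> e0; have e20 : 0 < e / 2 by rewrite divr_gt0.
have [S [uS _ hS]] := span_exists w cX e20.
exists (size S) => A E [uE EA sep].
apply: (sep_le_cover (e := e / 2) uE EA sep) => //; last by rewrite -splitr.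
by move=> y _; exact: hS.
Qed.

Lemma s_sepE n (w : n.-tuple 'I_p) (A : set X) e : 0 < e -> exists E,
  [/\ Defs.separated g A w e E, forall E', Defs.separated g A w e E' -> (size E' <= size E)%N
    & s_sep g A w e = (size E)%:R].
Proof.
move=> e0; have [M hM] := sep_bound w e0.
pose P : pred nat := fun m => `[< exists E, Defs.separated g A w e E /\ size E = m >].
have exP : exists i, P i.
  by exists 0%N; apply/asboolP; exists [::]; split => //; split.
have ubP : forall i, P i -> (i <= M)%N.
  by move=> i /asboolP [E [sE <-]]; exact: hM sE.
case: (ex_maxnP exP ubP) => m /asboolP [E [sE sz]] mx.
have mxE : forall E', Defs.separated g A w e E' -> (size E' <= size E)%N.
  by move=> E' sE'; rewrite sz; apply: mx; apply/asboolP; exists E'.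
exists E; split => //.
apply/eqP; rewrite eq_le; apply/andP; split.
  apply: ge_sup; first by exists (size E)%:R; exists E.
  by move=> _ [E' sE' <-]; rewrite ler_nat; exact: mxE.
apply: ub_le_sup; last by exists E.
by exists (size E)%:R => _ [E' sE' <-]; rewrite ler_nat; exact: mxE.
Qed.

Lemma b_spanE n (w : n.-tuple 'I_p) (A : set X) e : compact A -> 0 < e -> exists E,
  [/\ spanning g A w e E, forall E', spanning g A w e E' -> (size E <= size E')%N
    & b_span g A w e = (size E)%:R].
Proof.
move=> cA e0.
pose P : pred nat := fun m => `[< exists E, spanning g A w e E /\ size E = m >].
have exP : exists i, P i.
  have [S sS] := span_exists w cA e0.
  by exists (size S); apply/asboolP; exists S.
case: (ex_minnP exP) => m /asboolP [E [sE sz]] mn.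
have mnE : forall E', spanning g A w e E' -> (size E <= size E')%N.
  by move=> E' sE'; rewrite sz; apply: mn; apply/asboolP; exists E'.
exists E; split => //.
apply/eqP; rewrite eq_le; apply/andP; split; last first.
  apply: lb_le_inf; first by exists (size E)%:R; exists E.
  by move=> _ [E' sE' <-]; rewrite ler_nat; exact: mnE.
apply: ge_inf; last by exists E.
by exists 0 => _ [E' sE' <-]; rewrite ler0n.
Qed.

End B.


Section C.
Context (R : realType) (X : metricType R) (p : nat) (g : 'I_p -> X -> X).
Hypothesis gc : forall i, continuous (g i).
Hypothesis cX : compact [set: X].

Lemma s_mono_set n (w : n.-tuple 'I_p) (A B : set X) e : 0 < e -> A `<=` B ->
  s_sep g A w e <= s_sep g B w e.
Proof.
move=> e0 AB.
have [E [[uE EA sE] _ ->]] := s_sepE gc cX w A e0.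
have [E' [_ mx ->]] := s_sepE gc cX w B e0.
rewrite ler_nat; apply: mx; split => // x /EA; rewrite !in_setE; exact: AB.
Qed.

Lemma s_mono_eps n (w : n.-tuple 'I_p) (A : set X) e1 e2 : 0 < e1 -> e1 <= e2 ->
  s_sep g A w e2 <= s_sep g A w e1.
Proof.
move=> e10 e12; have e20 := lt_le_trans e10 e12.
have [E [[uE EA sE] _ ->]] := s_sepE gc cX w A e20.
have [E' [_ mx ->]] := s_sepE gc cX w A e10.
rewrite ler_nat; apply: mx; split => // x y xE yE xy.
exact: le_lt_trans e12 (sE x y xE yE xy).
Qed.

Lemma b_mono_eps n (w : n.-tuple 'I_p) (A : set X) e1 e2 : compact A -> 0 < e1 ->
  e1 <= e2 -> b_span g A w e2 <= b_span g A w e1.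
Proof.
move=> cA e10 e12; have e20 := lt_le_trans e10 e12.
have [E [[uE EA sE] _ ->]] := b_spanE gc w cA e10.
have [E' [_ mn ->]] := b_spanE gc w cA e20.
rewrite ler_nat; apply: mn; split => // y Ay.
have [x xE hx] := sE y Ay; exists x => //; exact: le_trans e12.
Qed.

Lemma s_ge1 n (w : n.-tuple 'I_p) (A : set X) e : 0 < e -> A !=set0 ->
  1 <= s_sep g A w e.
Proof.
move=> e0 [a Aa].
have [E [_ mx ->]] := s_sepE gc cX w A e0.
rewrite ler1n; apply: (@leq_trans (size [:: a])) => //; apply: mx; split => //.
- by move=> x; rewrite inE => /eqP ->; rewrite in_setE.
- by move=> x y; rewrite !inE => /eqP -> /eqP ->; rewrite eqxx.
Qed.

Lemma s_ge0 n (w : n.-tuple 'I_p) (A : set X) e : 0 < e -> 0 <= s_sep g A w e.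
Proof.
by move=> e0; have [E [_ _ ->]] := s_sepE gc cX w A e0.
Qed.

Lemma b_ge1 n (w : n.-tuple 'I_p) (A : set X) e : compact A -> 0 < e -> A !=set0 ->
  1 <= b_span g A w e.
Proof.
move=> cA e0 [a Aa].
have [E [[uE EA sE] _ ->]] := b_spanE gc w cA e0.
have [x xE _] := sE a Aa.
by rewrite ler1n; case: E xE {uE EA sE}.
Qed.

Lemma b_le_s n (w : n.-tuple 'I_p) (A : set X) e : compact A -> 0 < e ->
  b_span g A w e <= s_sep g A w e.
Proof.
move=> cA e0.
have [E [[uE EA sE] mx ->]] := s_sepE gc cX w A e0.
have [E' [_ mn ->]] := b_spanE gc w cA e0.
rewrite ler_nat; apply: mn; split => // y Ay.
have [//|nex] := pselect (exists2 x, x \in E & dword g w x y <= e).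
exfalso.
have yE : y \notin E.
  by apply/negP => yE; apply: nex; exists y => //; rewrite dwordxx ltW.
have : (size (y :: E) <= size E)%N.
  apply: mx; split.
  - by rewrite /= yE.
  - by move=> x; rewrite inE => /orP[/eqP ->|/EA]; rewrite ?in_setE.
  - have far : forall x, x \in E -> e < dword g w x y.
      move=> x xE; rewrite ltNge; apply/negP => h; apply: nex; by exists x.
    move=> x z; rewrite !inE => /orP[/eqP ->|xE] /orP[/eqP ->|zE].
    + by rewrite eqxx.
    + by move=> _; rewrite dwordC; exact: far.
    + by move=> _; exact: far.
    + exact: sE.
by rewrite /= ltnn.
Qed.

Lemma s_le_b_plus n (w : n.-tuple 'I_p) (K U : set X) (F : seq X) e :
  compact U -> 0 < e -> K `<=` U `|` [set x | x \in F] ->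
  s_sep g K w (e + e) <= b_span g U w e + (size F)%:R.
Proof.
move=> cU e0 KUF; have ee0 : 0 < e + e by rewrite addr_gt0.
have [E [[uE EK sE] _ ->]] := s_sepE gc cX w K ee0.
have [S [[uS SU hS] _ ->]] := b_spanE gc w cU e0.
rewrite -natrD ler_nat.
have [P _ PU] : {P : pred X & True & forall x, P x = `[< U x >]}.
  by exists (fun x => `[< U x >]).
rewrite -(count_predC P E) -!size_filter leq_add //.
- apply: (@sep_le_cover _ _ _ g _ w U _ _ (e + e) e).
  + exact: filter_uniq.
  + by move=> x; rewrite mem_filter PU => /andP[/asboolP].
  + by move=> x y; rewrite !mem_filter => /andP[_ xE] /andP[_ yE]; exact: sE.
  + by move=> y Uy; exact: hS.
  + by [].
- apply: uniq_leq_size; first exact: filter_uniq.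
  move=> x; rewrite mem_filter /= PU => /andP[/asboolPn nU xE].
  have := EK x xE; rewrite in_setE => /KUF [//|//].
Qed.

End C.


Section D.
Context (R : realType) (p : nat).
Hypothesis p0 : (0 < p)%N.

Definition gterm (F : forall n, n.-tuple 'I_p -> R) (n : nat) : R :=
  (n%:R)^-1 * ln ((p%:R ^- n) * \sum_(w : n.-tuple 'I_p) F n w).

Lemma growthE F : growth F = limn_esup (fun n => (gterm F n)%:E).
Proof. by []. Qed.

Lemma sum_ge1 (G : forall n, n.-tuple 'I_p -> R) n : (forall w, 1 <= G n w) ->
  1 <= p%:R ^- n * \sum_(w : n.-tuple 'I_p) G n w.
Proof.
move=> G1.
have h : \sum_(w : n.-tuple 'I_p) (1 : R) <= \sum_(w : n.-tuple 'I_p) G n w.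
  by apply: ler_sum => w _; exact: G1.
have e1 : \sum_(w : n.-tuple 'I_p) (1 : R) = (p%:R) ^+ n.
  by rewrite sumr_const card_tuple card_ord natrX.
rewrite e1 in h.
have pn0 : 0 < (p%:R : R) ^+ n by rewrite exprn_gt0 // ltr0n.
rewrite -[X in X <= _](mulVf (lt0r_neq0 pn0)).
by apply: ler_wpM2l h; rewrite invr_ge0 ltW.
Qed.

Lemma term_le (F G : forall n, n.-tuple 'I_p -> R) c n :
  (forall w, F n w <= c * G n w) -> 1 <= c -> (forall w, 1 <= G n w) ->
  gterm F n <= (n%:R)^-1 * ln c + gterm G n.
Proof.
move=> FG c1 G1; rewrite /gterm -mulrDr; apply: ler_wpM2l; first by rewrite invr_ge0.
set a := _ * \sum_w F n w; set b := _ * \sum_w G n w.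
have b1 : 1 <= b by exact: sum_ge1.
have hab : a <= c * b.
  rewrite /a /b mulrCA; apply: ler_wpM2l; first by rewrite invr_ge0 exprn_ge0.
  by rewrite mulr_sumr; apply: ler_sum => w _; exact: FG.
have c0 : 0 < c by apply: lt_le_trans c1.
have b0 : 0 < b by apply: lt_le_trans b1.
have [a0|a0] := leP a 0.
  by rewrite ln0 // addr_ge0 // ln_ge0.
have cb0 : 0 < c * b by apply: mulr_gt0.
by rewrite -lnM ?posrE //; rewrite ler_ln ?posrE.
Qed.

Lemma term_mono (F G : forall n, n.-tuple 'I_p -> R) n :
  (forall w, F n w <= G n w) -> (forall w, 1 <= G n w) ->
  gterm F n <= gterm G n.
Proof.
move=> FG G1; have := @term_le F G 1 n; rewrite ln1 mulr0 add0r; apply => //.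
by move=> w; rewrite mul1r.
Qed.

Lemma growth_ge (r : \bar R) (F : forall n, n.-tuple 'I_p -> R) :
  (forall N, exists2 n, (N <= n)%N & (r <= (gterm F n)%:E)%E) -> (r <= growth F)%E.
Proof.
move=> H; rewrite growthE /limn_esup limf_esupE.
apply: le_ereal_inf_tmp => _ [V [N _ NV] <-].
have [n Nn hn] := H N; apply: le_trans hn _; apply: ereal_sup_ubound.
by exists n => //; exact: NV.
Qed.

Lemma growth_le_ev (r : \bar R) (F : forall n, n.-tuple 'I_p -> R) :
  (exists N, forall n, (N <= n)%N -> ((gterm F n)%:E <= r)%E) -> (growth F <= r)%E.
Proof.
move=> [N H]; rewrite growthE /limn_esup limf_esupE.
apply: ge_ereal_inf; exists (ereal_sup ((fun n => (gterm F n)%:E) @` [set n | (N <= n)%N])).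
  by exists [set n | (N <= n)%N] => //; exists N.
by apply: ge_ereal_sup => _ [n /= Nn <-]; exact: H.
Qed.

Lemma growth_ge0 (G : forall n, n.-tuple 'I_p -> R) : (forall n w, 1 <= G n w) -> (0 <= growth G)%E.
Proof.
move=> G1; apply: growth_ge => N; exists N => //.
rewrite lee_fin /gterm mulr_ge0 // ?invr_ge0 // ln_ge0 //.
exact: sum_ge1.
Qed.

Lemma growth_le_scale (F G : forall n, n.-tuple 'I_p -> R) c :
  (forall n w, F n w <= c * G n w) -> 1 <= c -> (forall n w, 1 <= G n w) ->
  (growth F <= growth G)%E.
Proof.
move=> FG c1 G1; rewrite [X in (_ <= X)%E]growthE /limn_esup limf_esupE.
apply: le_ereal_inf_tmp => _ [V [N _ NV] <-].
apply/lee_addgt0Pr => e e0.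
have lc0 : 0 <= ln c / e by rewrite divr_ge0 // ?ln_ge0 // ltW.
set M := (Num.bound (ln c / e)).
apply: growth_le_ev; exists (maxn N M.+1) => n; rewrite geq_max => /andP[Nn Mn].
apply: le_trans (_ : ((n%:R)^-1 * ln c + gterm G n)%:E <= _)%E.
  by rewrite lee_fin; apply: term_le => // w; exact: FG.
rewrite EFinD addeC; apply: leeD.
  apply: ereal_sup_ubound; exists n => //; exact: NV.
have n0 : (0 < n)%N by apply: leq_trans Mn.
have n0' : 0 < (n%:R : R) by rewrite ltr0n.
have hb : ln c / e <= n%:R.
  apply: ltW; apply: lt_le_trans (archi_boundP lc0) _.
  by rewrite ler_nat; apply: ltnW.
rewrite lee_fin mulrC ler_pdivrMr // mulrC -ler_pdivrMr //.
Qed.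

End D.


Lemma lim_noninc (R : realType) (f : R -> \bar R) :
  (forall x y, 0 < x -> x <= y -> (f y <= f x)%E) ->
  lim (f @ 0^'+) = ereal_sup (f @` [set e | 0 < e]).
Proof.
move=> hf.
have h := @nonincreasing_at_right_cvge R f 0 (BInfty _ false) isT.
have h' : f x @[x --> 0^'+] --> ereal_sup (f @` [set` Interval (BRight 0) (BInfty R false)]).
  by apply: h => x y; rewrite !in_itv /= !andbT => x0 y0 xy; exact: hf.
rewrite (cvg_lim _ h') //; congr ereal_sup; congr image.
by apply/seteqP; split => x /=; rewrite in_itv /= andbT.
Qed.

Section E.
Context (R : realType) (X : metricType R) (p : nat) (g : 'I_p -> X -> X).
Hypothesis p0 : (0 < p)%N.
Hypothesis gc : forall i, continuous (g i).
Hypothesis cX : compact [set: X].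

Definition sgr (A : set X) (e : R) : \bar R := growth (fun n w => s_sep g A w e).

Lemma s_empty n (w : n.-tuple 'I_p) (A : set X) e : 0 < e -> ~ (A !=set0) ->
  s_sep g A w e = 0.
Proof.
move=> e0 A0; have [E [[uE EA _] _ ->]] := s_sepE gc cX w A e0.
case: E uE EA => [//|x E] _ /(_ x); rewrite inE eqxx in_setE => /(_ isT) Ax.
by exfalso; apply: A0; exists x.
Qed.

Lemma sgr_noninc (A : set X) x y : 0 < x -> x <= y -> (sgr A y <= sgr A x)%E.
Proof.
move=> x0 xy; have y0 := lt_le_trans x0 xy.
have [An0|A0] := pselect (A !=set0).
  apply: (@growth_le_scale _ _ p0 _ _ 1) => //.
  - by move=> n w; rewrite mul1r; exact: s_mono_eps.
  - by move=> n w; exact: s_ge1.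
rewrite /sgr; have -> // : (fun n (w : n.-tuple 'I_p) => s_sep g A w y) =
  (fun n (w : n.-tuple 'I_p) => s_sep g A w x).
apply: functional_extensionality_dep => n; apply: funext => w.
by rewrite !s_empty.
Qed.

Lemma Bd_noninc (K : set X) x y : compact K -> K !=set0 -> 0 < x -> x <= y ->
  (Bd g K y <= Bd g K x)%E.
Proof.
move=> cK Kn0 x0 xy; have y0 := lt_le_trans x0 xy.
apply: (@growth_le_scale _ _ p0 _ _ 1) => //.
- by move=> n w; rewrite mul1r; exact: b_mono_eps.
- by move=> n w; exact: b_ge1.
Qed.

Lemma hd_noninc (x0 : X) x y : 0 < x -> x <= y -> (hd g x0 y <= hd g x0 x)%E.
Proof.
move=> x0' xy; apply: le_ereal_inf_tmp => _ [K [cK nK] <-].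
apply: ge_ereal_inf; exists (Bd g K y); first by exists K.
apply: Bd_noninc => //; exists x0; exact: nbhs_singleton.
Qed.

Lemma htopK_sup (A : set X) : htopK g A = ereal_sup (sgr A @` [set e | 0 < e]).
Proof. by rewrite /htopK -lim_noninc //; move=> *; exact: sgr_noninc. Qed.

Lemma htopx_sup (x0 : X) : htopx g x0 = ereal_sup (hd g x0 @` [set e | 0 < e]).
Proof. by rewrite /htopx -lim_noninc //; move=> *; exact: hd_noninc. Qed.

End E.


Section F.
Context (R : realType) (X : metricType R) (p : nat) (g : 'I_p -> X -> X).
Hypothesis p0 : (0 < p)%N.
Hypothesis gc : forall i, continuous (g i).
Hypothesis cX : compact [set: X].

Lemma core_i (K : set X) (x0 : X) :
  (forall U, compact U -> nbhs x0 U -> exists F : seq X, K `<=` U `|` [set x | x \in F]) ->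
  (htopK g K <= htopx g x0)%E.
Proof.
move=> H; rewrite (htopK_sup p0 gc cX) (htopx_sup p0 gc).
apply: ge_ereal_sup => _ [e e0 <-].
have e20 : 0 < e / 2 by rewrite divr_gt0.
apply: (@le_trans _ _ (hd g x0 (e / 2))); last by apply: ereal_sup_ubound; exists (e / 2).
apply: le_ereal_inf_tmp => _ [U [cU nU] <-].
have [F KUF] := H U cU nU.
have Un0 : U !=set0 by exists x0; exact: nbhs_singleton.
apply: (@growth_le_scale _ _ p0 _ _ (1 + (size F)%:R)).
- move=> n w; rewrite {1}(splitr e).
  apply: le_trans (s_le_b_plus gc cX w cU e20 KUF) _.
  have b1 := b_ge1 gc w cU e20 Un0.
  rewrite mulrDl mul1r lerD2l ler_peMr //.
- by rewrite lerDl.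
- by move=> n w; exact: b_ge1.
Qed.

Lemma finite_outside (K : set X) (x0 : X) : closed K ->
  (forall y, limit_point K y -> y = x0) ->
  forall U, compact U -> nbhs x0 U -> exists F : seq X, K `<=` U `|` [set x | x \in F].
Proof.
move=> clK uniq U cU nU.
pose C := K `&` ~` (interior U).
have cC : compact C.
  apply: (subclosed_compact _ cX) => //; apply: closedI => //.
  by rewrite closedC; exact: open_interior.
have [[c Cc]|C0] := pselect (C !=set0); last first.
  exists [::] => k Kk; left; apply: interior_subset.
  by apply: contrapT => nk; apply: C0; exists k.
have [f hf] : {f : X -> set X & forall y, C y -> nbhs y (f y) /\ K `&` f y `<=` [set y]}.
  apply: (@choice _ _ (fun y V => C y -> nbhs y V /\ K `&` V `<=` [set y])) => y.
  have [Cy|nCy] := pselect (C y); last by exists setT.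
  have : ~ limit_point K y.
    move=> /uniq yx0; case: Cy => _; apply; rewrite yx0; exact: nU.
  rewrite not_limit_pointE => -[V nV KV]; by exists V.
have := cover_of c cC (D := C) (f := fun y => interior (f y)).
case.
- by move=> y _; exact: open_interior.
- by move=> y Cy; exists y => //; case: (hf y Cy).
move=> D' D'C CD; exists (finmap.enum_fset D') => k Kk.
have [Uk|nUk] := pselect (U k); first by left.
have Ck : C k by split => // /interior_subset.
have [y /= yD ky] := CD k Ck.
have Cy : C y by have := D'C y yD; rewrite in_setE.
have [_ sub] := hf y Cy.
have -> : k = y by apply: (sub k); split => //; exact: interior_subset.
by right.
Qed.

End F.


Lemma nat_big (R : realType) (x : R) : exists k0, forall k, (k0 <= k)%N -> x <= k%:R.
Proof.
exists (Num.bound `|x|) => k hk.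
apply: le_trans (ler_norm x) _; apply: ltW; apply: lt_le_trans (archi_boundP _) _ => //.
by rewrite ler_nat.
Qed.

Lemma inv_small (R : realType) (d : R) : 0 < d ->
  exists k0, forall k, (k0 <= k)%N -> (k.+1%:R)^-1 <= d.
Proof.
move=> d0; have [k0 hk] := nat_big (d^-1); exists k0 => k kk.
rewrite -[d]invrK lef_pV2 ?posrE ?invr_gt0 ?ltr0n //.
by apply: le_trans (hk k kk) _; rewrite ler_nat.
Qed.

Lemma le_via_reals (R : realType) (h s : \bar R) :
  (forall r : R, (r%:E < h)%E -> (r%:E <= s)%E) -> (h <= s)%E.
Proof.
case: h => [h| |] H; last by rewrite leNye.
- apply/lee_subgt0Pr => e e0; rewrite -EFinB; apply: H.
  by rewrite lte_fin ltrBlDr ltrDl.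
- case: s H => [s| |] H.
  + have := H (s + 1) (ltry _); rewrite lee_fin => h.
    have h1 : s < s + 1 by rewrite ltrDl ltr01.
    by have := lt_le_trans h1 h; rewrite ltxx.
  + by rewrite leey.
  + by have := H 0 (ltry _).
Qed.

Section G.
Context (R : realType) (X : metricType R).

Lemma closed_cball (x0 : X) (r : R) : closed [set y | mdist x0 y <= r].
Proof.
move=> y cly /=; rewrite leNgt; apply/negP => ry.
have := cly _ (mball_nbhs (x := y) (y := y) (e := mdist x0 y - r) _).
rewrite mdistxx subr_gt0 => /(_ ry) [z [/= zr yz]].
have := metric_triangle x0 z y; rewrite metric_sym in yz.
move=> h; have : mdist x0 y < r + (mdist x0 y - r).
  by apply: le_lt_trans h _; apply: ler_ltD.
by rewrite addrC subrK ltxx.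
Qed.

Lemma nbhs_cball (x0 : X) (r : R) : 0 < r -> nbhs x0 [set y | mdist x0 y <= r].
Proof.
move=> r0; apply/nbhs_ballP; exists r => // y; rewrite ballEmdist /=; exact: ltW.
Qed.

Lemma fin_sep (s : seq X) (y : X) : exists2 d : R, 0 < d &
  forall z, z \in s -> z != y -> d <= mdist y z.
Proof.
elim: s => [|a s [d d0 hd]]; first by exists 1.
have [ay|ay] := eqVneq a y.
  exists d => // z; rewrite inE => /orP[/eqP ->|]; first by rewrite ay eqxx.
  exact: hd.
exists (Num.min d (mdist y a)).
  by rewrite lt_min d0 mdist_gt0 eq_sym ay.
move=> z; rewrite inE => /orP[/eqP ->|zs zy]; first by rewrite ge_min lexx orbT.
by rewrite ge_min hd.
Qed.

End G.


Definition inv1 (R : realType) (k : nat) : R := (k.+1%:R)^-1.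

Lemma inv1_gt0 (R : realType) k : 0 < inv1 R k.
Proof. by rewrite /inv1 invr_gt0 ltr0n. Qed.

Section H.
Context (R : realType) (X : metricType R) (p : nat) (g : 'I_p -> X -> X).
Hypothesis p0 : (0 < p)%N.
Hypothesis gc : forall i, continuous (g i).
Hypothesis cX : compact [set: X].
Variable x0 : X.

Let ik k := inv1 R k.
Let ik0 k : 0 < ik k := inv1_gt0 R k.

Definition Uk (k : nat) := [set y : X | mdist x0 y <= ik k].

Lemma Uk_compact k : compact (Uk k).
Proof. by apply: (subclosed_compact _ cX) => //; exact: closed_cball. Qed.

Lemma Uk_nbhs k : nbhs x0 (Uk k).
Proof. exact: nbhs_cball. Qed.

Lemma Uk_n0 k : Uk k !=set0.
Proof. by exists x0; rewrite /Uk /= mdistxx ltW. Qed.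

Lemma hd_ge0 e : 0 < e -> (0 <= hd g x0 e)%E.
Proof.
move=> e0; apply: le_ereal_inf_tmp => _ [K [cK nK] <-].
apply: growth_ge0 => // n w; apply: b_ge1 => //.
by exists x0; exact: nbhs_singleton.
Qed.

Lemma hd_le_sgr k e : 0 < e -> (hd g x0 e <= sgr g (Uk k) e)%E.
Proof.
move=> e0; apply: ge_ereal_inf; exists (Bd g (Uk k) e).
  by exists (Uk k) => //; split; [exact: Uk_compact|exact: Uk_nbhs].
apply: (@growth_le_scale _ _ p0 _ _ 1) => //.
- by move=> n w; rewrite mul1r; apply: b_le_s => //; exact: Uk_compact.
- by move=> n w; apply: s_ge1 => //; exact: Uk_n0.
Qed.

Definition L (k j : nat) : R :=
  match hd g x0 (ik j) with
  | r%:E => r - ik k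
  | +oo%E => k%:R
  | -oo%E => 0 end.

Lemma L_lt k j : ((L k j)%:E < hd g x0 (ik j))%E.
Proof.
have := hd_ge0 (ik0 j); rewrite /L.
case: (hd g x0 (ik j)) => [r| |] //= _.
- by rewrite lte_fin ltrBlDr ltrDl.
- exact: ltry.
Qed.

Lemma L_big j r : (r%:E < hd g x0 (ik j))%E ->
  exists k0, forall k, (k0 <= k)%N -> r <= L k j.
Proof.
rewrite /L; case: (hd g x0 (ik j)) => [h| |] //= hr.
- rewrite lte_fin -subr_gt0 in hr.
  have [k0 hk] := inv_small hr; exists k0 => k kk.
  by rewrite lerBrDr addrC -lerBrDr; exact: hk.
- exact: nat_big.
Qed.


Lemma claim k j : exists F : seq X, (forall x, x \in F -> Uk k x) /\
  exists2 n, (k <= n)%N &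
    L k j <= gterm (fun n (w : n.-tuple 'I_p) => s_sep g [set x | x \in F] w (ik j)) n.
Proof.
have hlt := lt_le_trans (L_lt k j) (hd_le_sgr k (ik0 j)).
have [n kn hn] : exists2 n, (k <= n)%N &
    L k j <= gterm (fun n (w : n.-tuple 'I_p) => s_sep g (Uk k) w (ik j)) n.
  apply: contrapT => hno.
  have : (sgr g (Uk k) (ik j) <= (L k j)%:E)%E.
    apply: growth_le_ev; exists k => n kn; rewrite lee_fin; apply/ltW.
    rewrite ltNge; apply/negP => h; apply: hno; by exists n.
  by move=> /(lt_le_trans hlt); rewrite ltxx.
have [E hE] : {E : n.-tuple 'I_p -> seq X & forall w,
    Defs.separated g (Uk k) w (ik j) (E w) /\ s_sep g (Uk k) w (ik j) = (size (E w))%:R}.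
  apply: (@choice _ _ (fun w E => Defs.separated g (Uk k) w (ik j) E /\
     s_sep g (Uk k) w (ik j) = (size E)%:R)) => w.
  have [E [sE _ eq]] := s_sepE gc cX w (Uk k) (ik0 j); by exists E.
pose F := flatten [seq E w | w <- index_enum (n.-tuple 'I_p)].
have EF : forall w x, x \in E w -> x \in F.
  by move=> w x xE; apply/flatten_mapP; exists w => //; exact: mem_index_enum.
exists F; split.
  move=> x /flatten_mapP [w _ xE]; have [[_ EU _] _] := hE w.
  by have := EU x xE; rewrite in_setE.
exists n => //; apply: le_trans hn _.
have sUF : forall w : n.-tuple 'I_p, s_sep g (Uk k) w (ik j) <= s_sep g [set x | x \in F] w (ik j).
  move=> w; have [[uE EU sE] ->] := hE w.
  have [E' [_ mx ->]] := s_sepE gc cX w [set x | x \in F] (ik0 j).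
  rewrite ler_nat; apply: mx; split => // x xE; rewrite in_setE /=; exact: EF xE.
apply: term_mono => // w; apply: le_trans (sUF w); apply: s_ge1 => //; exact: Uk_n0.
Qed.


Lemma part_ii : exists K : set X,
  [/\ countable K, closed K, K x0, (forall y, limit_point K y -> y = x0) &
     (limit_point [set: X] x0 -> limit_point K x0)] /\ htopx g x0 = htopK g K.
Proof.
have [Fc hFc] : {Fc : nat -> nat -> seq X & forall k j,
    (forall x, x \in Fc k j -> Uk k x) /\
    exists2 n, (k <= n)%N &
      L k j <= gterm (fun n (w : n.-tuple 'I_p) => s_sep g [set x | x \in Fc k j] w (ik j)) n}.
  apply: (@choice _ _ (fun k f => forall j, (forall x, x \in f j -> Uk k x) /\
    exists2 n, (k <= n)%N &
      L k j <= gterm (fun n (w : n.-tuple 'I_p) => s_sep g [set x | x \in f j] w (ik j)) n)) => k.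
  have [f hf] := choice (fun j => claim k j); by exists f.
have [z hz] : {z : nat -> X & forall k, mdist x0 (z k) <= ik k /\
    (limit_point [set: X] x0 -> z k != x0)}.
  apply: (@choice _ _ (fun k y => mdist x0 y <= ik k /\
    (limit_point [set: X] x0 -> y != x0))) => k.
  have [lp|nlp] := pselect (limit_point [set: X] x0); last first.
    by exists x0; split => //; rewrite mdistxx ltW.
  have [y [yx0 _ yb]] := lp _ (nbhsx_ballx x0 _ (ik0 k)).
  exists y; split => //; move: yb; rewrite ballEmdist /=; exact: ltW.
pose T k := x0 :: z k :: flatten [seq Fc k j | j <- iota 0 k.+1].
have Tb : forall k x, x \in T k -> mdist x0 x <= ik k.
  move=> k x; rewrite !inE => /orP[/eqP ->|/orP[/eqP ->|]].
  - by rewrite mdistxx ltW.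
  - by case: (hz k).
  - by move=> /flatten_mapP [j _ xF]; have [hU _] := hFc k j; exact: hU.
pose K := \bigcup_(k in [set: nat]) [set x | x \in T k].
have Kx0 : K x0 by exists 0%N => //=; rewrite inE eqxx.
have iso : forall y, y != x0 -> exists2 d, 0 < d & forall w, K w -> mdist y w < d -> w = y.
  move=> y yx0; set r := mdist x0 y.
  have r0 : 0 < r by rewrite mdist_gt0 eq_sym.
  have r20 : 0 < r / 2 by rewrite divr_gt0.
  have [N hN] := inv_small r20.
  have [d' d'0 hd'] := fin_sep (flatten [seq T k | k <- iota 0 N]) y.
  exists (Num.min (r / 2) d'); first by rewrite lt_min r20 d'0.
  move=> w [k _ wT] yw; rewrite lt_min in yw; case/andP: yw => yw1 yw2.
  have [Nk|kN] := leqP N k.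
    exfalso; have h1 := le_trans (Tb k w wT) (hN k Nk).
    have := metric_triangle x0 w y; rewrite (metric_sym w y) -/r.
    move=> h2; have : r < r / 2 + r / 2 by apply: le_lt_trans h2 _; exact: ler_ltD.
    by rewrite -splitr ltxx.
  apply/eqP; apply: contraT => wy.
  have wS : w \in flatten [seq T k | k <- iota 0 N].
    by apply/flatten_mapP; exists k => //; rewrite mem_iota.
  by have := hd' w wS wy; rewrite leNgt yw2.
have clK : closed K.
  move=> y cly; apply: contrapT => nKy.
  have yx0 : y != x0 by apply/eqP => yx; apply: nKy; rewrite yx.
  have [d d0 hd] := iso y yx0.
  have [w [Kw yw]] := cly _ (nbhsx_ballx y _ d0).
  move: yw; rewrite ballEmdist /= => yw.
  by apply: nKy; rewrite -(hd w Kw yw).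
have ulp : forall y, limit_point K y -> y = x0.
  move=> y lpy; apply/eqP; apply: contraT => yx0.
  have [d d0 hd] := iso y yx0.
  have [w [wy Kw yw]] := lpy _ (nbhsx_ballx y _ d0).
  move: yw; rewrite ballEmdist /= => yw.
  by move: wy; rewrite (hd w Kw yw) eqxx.
exists K; split; first split => //.
- apply: bigcup_countable; first exact: countableP.
  by move=> k _; apply: finite_set_countable; exact: finite_seq.
- move=> lp V /nbhs_ballP [e e0 hV].
  have e20 : 0 < e / 2 by rewrite divr_gt0.
  have [k hk] := inv_small e20.
  have [zk zx0] := hz k.
  exists (z k); split; first exact: zx0.
    by exists k => //=; rewrite !inE eqxx orbT.
  apply: hV; rewrite ballEmdist /=; apply: le_lt_trans zk _.
  apply: le_lt_trans (hk k (leqnn _)) _; rewrite ltr_pdivrMr // ltr_pMr //.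
  by rewrite ltr1n.
apply/eqP; rewrite eq_le; apply/andP; split; last first.
  by apply: (core_i p0 gc cX) => U cU nU; exact: (finite_outside cX clK ulp cU nU).
rewrite (htopx_sup p0 gc) (htopK_sup p0 gc cX).
apply: ge_ereal_sup => _ [e e0 <-].
have [j hj] := inv_small e0.
apply: le_trans (hd_noninc p0 gc x0 (ik0 j) (hj j (leqnn _))) _.
apply: (@le_trans _ _ (sgr g K (ik j))); last first.
  by apply: ereal_sup_ubound; exists (ik j) => //; exact: ik0.
apply: le_via_reals => r hr.
have [k0 hk0] := L_big hr.
apply: growth_ge => N.
pose k := maxn (maxn N j) k0.
have [hU [n kn hn]] := hFc k j.
exists n; first by apply: leq_trans kn; rewrite /k !leq_max leqnn.
rewrite lee_fin; apply: le_trans (hk0 k _) _; first by rewrite /k leq_max leqnn orbT.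
apply: le_trans hn _; apply: term_mono => // w.
- apply: s_mono_set => //.
  move=> x /= xF; exists k => //=; rewrite !inE; apply/orP; right; apply/orP; right.
  apply/flatten_mapP; exists j => //; rewrite mem_iota add0n ltnS /k !leq_max leqnn.
  by rewrite orbT.
- by apply: s_ge1 => //; exists x0.
Qed.

End H.

Unset Implicit Arguments.

Theorem mainTheorem10 (R : realType) (X : metricType R) (p : nat)
  (g : 'I_p -> X -> X) :
  (0 < p)%N ->
  compact [set: X] ->
  (forall i, continuous (g i)) ->
  (* (i) *)
  (forall (K : set X) (x0 : X),
      countable K -> closed K ->
      limit_point K x0 -> (forall y, limit_point K y -> y = x0) ->
      (htopK g K <= htopx g x0)%E) /\
  (* (ii) *)
  (forall x0 : X, exists K : set X,
      [/\ countable K, closed K, K x0,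
          (forall y, limit_point K y -> y = x0) &
          (limit_point [set: X] x0 -> limit_point K x0)] /\
      htopx g x0 = htopK g K).
Proof.
move=> p0 cX gc; split.
- move=> K x0 _ clK _ ulp.
  apply: (core_i p0 gc cX) => U cU nU; exact: (finite_outside cX clK ulp cU nU).
- move=> x0; exact: (part_ii p0 gc cX).
Qed.
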